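(* Let $Q$ be a fixed positive integer and let $k$ be any positive integer. Then for every integer $i$, \[ \nu_k(\gamma_i)=\left(\frac{2k-1}{2}\right)K_{k-1}\Big(-\nu_2(\gamma_i),\ \nu_2(\gamma_{i+1}),\ \ldots,\ (-1)^{k-1}\nu_2(\gamma_{i+k-2})\Big), \] where the $j$-th argument of $K_{k-1}$ (for $1\le j\le k-1$) is $(-1)^j\nu_2(\gamma_{i+j-1})$ (for $k=1$ the right-hand side is $\left(\frac{1}{2}\right)K_0=1$).
   Context: For $Q\in\mathbb{N}$, the Farey fractions of order $Q$ are $\mathcal{F}_Q=\{a/q\in\mathbb{Q}: 1\le q\le Q,\ 0<a\le q,\ \gcd(a,q)=1\}$. Write $\mathcal{F}_Q=\{\gamma_1,\ldots,\gamma_{N(Q)}\}$ with $1/Q=\gamma_1<\gamma_2<\cdots<\gamma_{N(Q)}=1$, and extend to all $i\in\mathbb{Z}$ by $\gamma_{i+N(Q)}=\gamma_i+1$. For each $i$ write $\gamma_i=p_i/q_i$ in lowest terms with $q_i>0$. For a positive integer $k$, the $k$-index of $\gamma_i$ is $\nu_k(\gamma_i)=p_{i+k-1}q_{i-1}-p_{i-1}q_{i+k-1}$ (this depends on $Q$; note $\nu_1\equiv1$). The convergent polynomials are defined by $K_0=1$, $K_1(x_1)=x_1$, and $K_n(x_1,\ldots,x_n)=x_nK_{n-1}(x_1,\ldots,x_{n-1})+K_{n-2}(x_1,\ldots,x_{n-2})$ for $n\ge2$. The Kronecker symbol $\left(\frac{n}{2}\right)$ is $0$ if $n$ is even, $1$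 if $n\equiv\pm1\pmod 8$, and $-1$ if $n\equiv\pm3\pmod 8$. *)

(* Defs.v *)
From mathcomp Require Import all_boot all_order all_algebra.
Set Implicit Arguments. Unset Strict Implicit. Unset Printing Implicit Defensive.
Import Order.TTheory GRing.Theory Num.Theory.
Local Open Scope ring_scope.

(* Farey fractions of order Q, in increasing order:
   gamma_1 < ... < gamma_N, listed here as entries 0 .. N-1. *)
Definition farey_list (Q : nat) : seq rat :=
  sort <=%R (flatten [seq [seq ((a%:R : rat) / (q%:R : rat)) | a <- iota 1 q & coprime a q] | q <- iota 1 Q]).

Definition farey_N (Q : nat) : nat := size (farey_list Q).

(* gamma_i for i : int, with gamma_{i+N} = gamma_i + 1 and gamma_1 = 1/Q. *)
Definition gamma (Q : nat) (i : int) : rat :=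
  let n := (farey_N Q)%:Z in
  nth 0 (farey_list Q) `|modz (i - 1) n|%N + ((divz (i - 1) n)%:~R).

Definition p_ (Q : nat) (i : int) : int := numq (gamma Q i).
Definition q_ (Q : nat) (i : int) : int := denq (gamma Q i).

Definition nu (Q k : nat) (i : int) : int :=
  p_ Q (i + k%:Z - 1) * q_ Q (i - 1) - p_ Q (i - 1) * q_ Q (i + k%:Z - 1).

(* Convergent polynomials K_n(x_1,...,x_n), arguments given as x : nat -> int
   (only x 1, ..., x n are used). *)
Fixpoint K (n : nat) (x : nat -> int) : int :=
  match n with
  | 0 => 1
  | 1 => x 1%N
  | (m.+1 as n1).+1 => x n1.+1 * K n1 x + K m x
  end.

Definition kron2 (n : int) : int :=
  if (2 %| n)%Z then 0
  else if ((modz n 8 == 1) || (modz n 8 == 7)) then 1 else -1.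

(* Main.v *)
Require Import Defs.
From mathcomp Require Import all_boot all_order all_algebra.
From mathcomp Require Import zify ring lra.
Import Order.TTheory GRing.Theory Num.Theory.
Local Open Scope ring_scope.

Lemma reducedq (x y : int) : 0 < y -> coprimez x y ->
  numq (x%:~R / y%:~R : rat) = x /\ denq (x%:~R / y%:~R : rat) = y.
Proof.
move=> y0 cxy; rewrite coprimezE in cxy.
rewrite coprimeq_num // coprimeq_den // gtr0_sg // mul1r gtr0_norm //.
by rewrite gt_eqF.
Qed.

Lemma coprime_numden (z : rat) : coprimez (numq z) (denq z).
Proof. by rewrite coprimezE coprime_num_den. Qed.

Lemma shiftq (z : rat) (n : int) :
  numq (z + n%:~R) = numq z + n * denq z /\ denq (z + n%:~R) = denq z.
Proof.
have -> : z + n%:~R = (numq z + n * denq z)%:~R / (denq z)%:~R.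
  rewrite rmorphD rmorphM /= mulrDl -{1}(divq_num_den z); congr (_ + _).
  by rewrite -mulrA divff ?mulr1 // intr_eq0 gt_eqF ?denq_gt0.
apply: reducedq; first exact: denq_gt0.
have /coprimezP [[u v] /= h] := coprime_numden z.
apply/coprimezP; exists (u, v - u * n) => /=.
by rewrite -h; ring.
Qed.

Definition L (Q : nat) : seq rat :=
  flatten [seq [seq ((a%:R : rat) / (q%:R : rat)) | a <- iota 1 q & coprime a q] | q <- iota 1 Q].

Lemma ltq (x y : rat) : (x < y) = (numq x * denq y < numq y * denq x).
Proof. exact: lt_ratE. Qed.
Lemma leq_q (x y : rat) : (x <= y) = (numq x * denq y <= numq y * denq x).
Proof. exact: le_ratE. Qed.

Lemma memL (Q : nat) (z : rat) :
  z \in L Q <-> [/\ 0 < numq z, numq z <= denq z & denq z <= Q%:Z].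
Proof.
split.
  case/flatten_mapP => q; rewrite mem_iota => /andP [q1 qQ].
  case/mapP => a; rewrite mem_filter mem_iota => /andP [cop /andP [a1 aq]] ->.
  have q0 : 0 < q%:Z by lia.
  have cz : coprimez a q by rewrite coprimezE.
  have [hn hd] := @reducedq a q q0 cz.
  rewrite (_ : (a%:R / q%:R : rat) = (a%:Z)%:~R / (q%:Z)%:~R) //.
  rewrite hn hd; split; lia.
case=> h1 h2 h3; apply/flatten_mapP; exists `|denq z|%N.
  rewrite mem_iota; have := denq_gt0 z; lia.
apply/mapP; exists `|numq z|%N.
  rewrite mem_filter mem_iota coprime_num_den /=; have := denq_gt0 z; lia.
rewrite -{1}(divq_num_den z).
have -> : numq z = (`|numq z|%N)%:Z by lia.
have -> : denq z = (`|denq z|%N)%:Z by (have := denq_gt0 z; lia).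
by [].
Qed.

Lemma uniqL (Q : nat) : uniq (L Q).
Proof.
elim: Q => [|Q IH] //.
rewrite /L (_ : iota 1 Q.+1 = iota 1 Q ++ [:: 1 + Q]%N); last by rewrite -[Q.+1]addn1 iotaD.
rewrite map_cat flatten_cat -/(L Q).
rewrite (_ : forall (f : nat -> seq rat) x, flatten (map f [:: x]) = f x); last by move=> f x; rewrite /= cats0.
rewrite cat_uniq IH andTb.
apply/andP; split.
  apply/hasPn => z /mapP [a]; rewrite mem_filter mem_iota => /andP [cop /andP [a1 aq]] ->.
  apply/negP => /memL [_ _].
  have q0 : 0 < (1 + Q)%N%:Z by lia.
  have cz : coprimez a (1 + Q)%N by rewrite coprimezE.
  have [hn hd] := @reducedq a (1 + Q)%N q0 cz.
  rewrite (_ : (a%:R / (1 + Q)%:R : rat) = (a%:Z)%:~R / ((1 + Q)%N%:Z)%:~R) //.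
  rewrite hd; lia.
rewrite map_inj_uniq ?filter_uniq ?iota_uniq // => a b /= h.
apply/eqP; rewrite -(eqr_nat rat); apply/eqP.
apply: (mulIf (x := ((1 + Q)%:R)^-1)); first by rewrite invr_eq0 pnatr_eq0.
exact: h.
Qed.

Definition det (u w : rat) : int := numq w * denq u - numq u * denq w.

Lemma neighbor (Q : nat) (u w : rat) : 0 <= u -> denq u <= Q%:Z ->
  w \in L Q -> u < w -> (forall z, z \in L Q -> u < z -> w <= z) -> det u w = 1.
Proof.
move=> u0 uQ /memL [c0 cs sQ] uw hmin.
rewrite -numq_ge0 in u0.
have q0 := denq_gt0 u; have s0 := denq_gt0 w.
have /coprimezP [[u1 v1] /= hb] := coprime_numden u.
set a := numq u in u0 hb uw *; set q := denq u in q0 uQ hb uw *.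
set c := numq w in c0 cs uw *; set s := denq w in s0 cs sQ uw *.
rewrite ltq -/a -/q -/c -/s in uw.
set t := ((Q%:Z + u1) %/ q)%Z.
set r := ((Q%:Z + u1) %% q)%Z.
have hdiv : Q%:Z + u1 = t * q + r by rewrite /t /r -divz_eq.
have r0 : 0 <= r by apply: modz_ge0; rewrite gt_eqF.
have rq : r < q by have := ltz_mod (Q%:Z + u1) (d:=q) ltac:(by rewrite gt_eqF); rewrite gtr0_norm.
set y := - u1 + t * q.
set x := v1 + t * a.
have hxy : x * q - a * y = 1 by rewrite /x /y -hb; ring.
have y0 : 0 < y by lia.
have yQ : y <= Q%:Z by lia.
have cxy : coprimez x y by apply/coprimezP; exists (q, - a) => /=; rewrite -hxy; ring.
have [hn hd] := @reducedq x y y0 cxy.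
set R := (x%:~R / y%:~R : rat) in hn hd.
have hid : (c * q - a * s) * y + (x * s - c * y) * q = s by rewrite -[s in RHS]mul1r -hxy; ring.
case: (ltrP 0 (x * s - c * y)) => hD2.
  exfalso; nia.
have hRw : R <= w by rewrite leq_q hn hd -/c -/s; lia.
have huR : u < R by rewrite ltq hn hd -/a -/q; lia.
have hRL : R \in L Q by apply/memL; rewrite hn hd; split; nia.
have := hmin R hRL huR => hwR.
have hRw' : R = w by apply/eqP; rewrite eq_le hRw hwR.
by rewrite /det -hRw' hn hd -/a -/q.
Qed.

Section G.
Variable Q : nat.
Hypothesis hQ : (0 < Q)%N.
Local Notation F := (farey_list Q).
Local Notation N := (farey_N Q).

Lemma memF z : (z \in F) = (z \in L Q).
Proof. exact: mem_sort. Qed.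

Lemma sortedF : sorted <=%R F.
Proof. apply: sort_sorted; exact: le_total. Qed.

Lemma uniqF : uniq F.
Proof. by rewrite sort_uniq uniqL. Qed.

Lemma one_in : (1 : rat) \in L Q.
Proof. by apply/memL; split => //; rewrite /= ; lia. Qed.

Lemma N_gt0 : (0 < N)%N.
Proof.
rewrite /farey_N; case E: F => //.
by have := one_in; rewrite -memF E.
Qed.

Lemma nth_le i j : (i <= j)%N -> (j < N)%N -> nth 0 F i <= nth 0 F j.
Proof.
move=> ij jN; apply: (sorted_leq_nth le_trans lexx) => //.
  exact: sortedF.
by rewrite inE; exact: leq_ltn_trans jN.
Qed.

Lemma nth_lt i j : (i < j)%N -> (j < N)%N -> nth 0 F i < nth 0 F j.
Proof.
move=> ij jN; rewrite lt_neqAle nth_le ?andbT //; last exact: ltnW.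
rewrite eq_sym nth_uniq ?uniqF //; first by rewrite gtn_eqF.
exact: ltn_trans jN.
Qed.

Lemma nth_inL j : (j < N)%N -> nth 0 F j \in L Q.
Proof. by move=> jN; rewrite -memF mem_nth. Qed.

Lemma in_nth z : z \in L Q -> exists2 k, (k < N)%N & z = nth 0 F k.
Proof.
rewrite -memF => hz; exists (index z F); first by rewrite index_mem.
by rewrite nth_index.
Qed.

Lemma last_one : nth 0 F N.-1 = 1.
Proof.
have N0 := N_gt0.
have hL : nth 0 F N.-1 \in L Q by apply: nth_inL; lia.
have /memL [_ h1 _] := hL.
have [k kN hk] := in_nth _ one_in.
apply/eqP; rewrite eq_le; apply/andP; split.
  by rewrite leq_q (_ : numq 1 = 1) // (_ : denq 1 = 1) // mulr1 mul1r.
rewrite hk; apply: nth_le; lia.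
Qed.

Lemma det_shift u w (n : int) : det (u + n%:~R) (w + n%:~R) = det u w.
Proof.
rewrite /det; have [a b] := shiftq u n; have [c d] := shiftq w n.
rewrite a b c d; ring.
Qed.

Lemma gammaE (n : int) (j : nat) : (j < N)%N ->
  gamma Q (n * N%:Z + j%:Z + 1) = nth 0 F j + n%:~R.
Proof.
move=> jN; rewrite /gamma.
have -> : n * N%:Z + j%:Z + 1 - 1 = n * N%:Z + j%:Z by ring.
have N0 : N%:Z != 0 by rewrite gt_eqF //; lia.
rewrite divzMDl // modzMDl divz_small; last by apply/andP; split; lia.
rewrite modz_small; last by apply/andP; split; lia.
by rewrite addr0.
Qed.

Lemma det_step (m : int) : det (gamma Q m) (gamma Q (m + 1)) = 1.
Proof.
have N0 : N%:Z != 0 by rewrite gt_eqF //; have := N_gt0; lia.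
set n := ((m - 1) %/ N%:Z)%Z.
have hr0 : 0 <= ((m - 1) %% N%:Z)%Z by apply: modz_ge0.
have hrN := ltz_mod (m - 1) N0.
set j := `|((m - 1) %% N%:Z)%Z|%N.
have hj : ((m - 1) %% N%:Z)%Z = j%:Z by rewrite /j; lia.
have jN : (j < N)%N by lia.
have hm : m = n * N%:Z + j%:Z + 1 by rewrite -hj /n -divz_eq; ring.
rewrite hm gammaE //.
case: (ltnP j.+1 N) => hj1.
  have -> : n * N%:Z + j%:Z + 1 + 1 = n * N%:Z + j.+1%:Z + 1 by lia.
  rewrite gammaE // det_shift; apply: (neighbor Q).
  - by have /memL [h1 _ _] := nth_inL _ jN; rewrite -numq_ge0; lia.
  - by have /memL [_ _ h] := nth_inL _ jN.
  - exact: nth_inL.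
  - exact: nth_lt.
  move=> z /in_nth [k kN ->] hz; case: (leqP k j) => hk.
    by have := nth_le _ _ hk jN; rewrite leNgt hz.
  exact: nth_le.
have hjN : j = N.-1 by lia.
have -> : n * N%:Z + j%:Z + 1 + 1 = (n + 1) * N%:Z + 0%N%:Z + 1 by lia.
rewrite gammaE ?N_gt0 // hjN last_one.
have -> : (1 : rat) + n%:~R = 0 + (n + 1)%:~R by rewrite rmorphD /=; ring.
rewrite det_shift; apply: (neighbor Q) => //.
- by apply: nth_inL; exact: N_gt0.
- have h0 : nth 0 F 0 \in L Q by apply: nth_inL; exact: N_gt0.
  by have /memL [h1 _ _] := h0; rewrite -numq_gt0.
move=> z /in_nth [k kN ->] _; exact: nth_le.
Qed.
End G.

Lemma nu_det Q k i : nu Q k i = det (gamma Q (i - 1)) (gamma Q (i + k%:Z - 1)).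
Proof. by []. Qed.

Lemma plucker A B C D : det A B * det C D - det A C * det B D + det A D * det B C = 0.
Proof. rewrite /det; ring. Qed.

Lemma nu_rec Q (hQ : (0 < Q)%N) k i :
  nu Q k.+2 i = nu Q 2 (i + k%:Z) * nu Q k.+1 i - nu Q k i.
Proof.
rewrite !nu_det.
have -> : i + (k.+2)%:Z - 1 = (i + k%:Z) + 1 by lia.
have -> : i + k%:Z + 2%:Z - 1 = (i + k%:Z) + 1 by lia.
have -> : i + (k.+1)%:Z - 1 = i + k%:Z by lia.
have hBC := det_step Q hQ (i + k%:Z - 1).
rewrite (_ : i + k%:Z - 1 + 1 = i + k%:Z) in hBC; last by lia.
have hCD := det_step Q hQ (i + k%:Z).
have := plucker (gamma Q (i - 1)) (gamma Q (i + k%:Z - 1)) (gamma Q (i + k%:Z)) (gamma Q (i + k%:Z + 1)).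
rewrite hBC hCD => h.
lia.
Qed.

Definition sgn (n : nat) : int := if (n %% 4 == 0)%N || (n %% 4 == 3)%N then 1 else -1.

Lemma kron2_eq n : kron2 (2 * (n.+1)%:Z - 1) = sgn n.
Proof.
have -> : 2 * (n.+1)%:Z - 1 = (2 * n + 1)%N%:Z by lia.
rewrite /kron2 /sgn modz_nat.
have -> : (2 %| (2 * n + 1)%N%:Z)%Z = false.
  apply/negbTE; rewrite /dvdz /=; apply/negP => h; lia.
have h4 : (n %% 4 < 4)%N by rewrite ltn_mod.
case hn: (n %% 4)%N h4 => [|[|[|[|r]]]] h4 //=.
- by have -> : ((2 * n + 1) %% 8 = 1)%N by lia.
- by have -> : ((2 * n + 1) %% 8 = 3)%N by lia.
- by have -> : ((2 * n + 1) %% 8 = 5)%N by lia.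
- by have -> : ((2 * n + 1) %% 8 = 7)%N by lia.
Qed.

Lemma sgn_rec1 n : sgn n.+2 = - sgn n.
Proof.
rewrite /sgn.
have h4 : (n %% 4 < 4)%N by rewrite ltn_mod.
case hn: (n %% 4)%N h4 => [|[|[|[|r]]]] h4 //=.
- by have -> : (n.+2 %% 4 = 2)%N by lia.
- by have -> : (n.+2 %% 4 = 3)%N by lia.
- by have -> : (n.+2 %% 4 = 0)%N by lia.
- by have -> : (n.+2 %% 4 = 1)%N by lia.
Qed.

Lemma sgn_rec2 n : sgn n.+2 * (-1) ^+ n.+2 = sgn n.+1.
Proof.
rewrite -signr_odd /sgn.
have h4 : (n %% 4 < 4)%N by rewrite ltn_mod.
case hn: (n %% 4)%N h4 => [|[|[|[|r]]]] h4 //=.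
- have -> : (n.+2 %% 4 = 2)%N by lia.
  have -> : (n.+1 %% 4 = 1)%N by lia.
  have ho : (odd n : nat) = 0%N by rewrite -modn2; lia.
  rewrite (_ : odd n = false); last by case: (odd n) ho.
  by [].
- have -> : (n.+2 %% 4 = 3)%N by lia.
  have -> : (n.+1 %% 4 = 2)%N by lia.
  have ho : (odd n : nat) = 1%N by rewrite -modn2; lia.
  rewrite (_ : odd n = true); last by case: (odd n) ho.
  by [].
- have -> : (n.+2 %% 4 = 0)%N by lia.
  have -> : (n.+1 %% 4 = 3)%N by lia.
  have ho : (odd n : nat) = 0%N by rewrite -modn2; lia.
  rewrite (_ : odd n = false); last by case: (odd n) ho.
  by [].
- have -> : (n.+2 %% 4 = 1)%N by lia.
  have -> : (n.+1 %% 4 = 0)%N by lia.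
  have ho : (odd n : nat) = 1%N by rewrite -modn2; lia.
  rewrite (_ : odd n = true); last by case: (odd n) ho.
  by [].
Qed.

Theorem theorem1 (Q : nat) (hQ : (0 < Q)%N) (k : nat) (hk : (0 < k)%N) (i : int) :
  nu Q k i =
  kron2 (2 * k%:Z - 1) *
  K k.-1 (fun j : nat => (-1) ^+ j * nu Q 2 (i + j%:Z - 1)).
Proof.
case: k hk => // n _ /=; rewrite kron2_eq.
set x := (fun j : nat => _).
suff : nu Q n.+1 i = sgn n * K n x /\ nu Q n.+2 i = sgn n.+1 * K n.+1 x by case.
elim: n => [|n [IH1 IH2]].
  have h1 := det_step Q hQ (i - 1).
  split.
    rewrite nu_det (_ : i + 1%:Z - 1 = i - 1 + 1); last by lia.
    by rewrite h1.
  rewrite (_ : sgn 1 = -1) // (_ : K 1 x = x 1%N) // /x expr1.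
  rewrite (_ : i + 1%:Z - 1 = i); last by lia.
  ring.
split => //.
rewrite nu_rec // IH1 IH2.
have -> : K n.+2 x = x n.+2 * K n.+1 x + K n x by [].
have -> : x n.+2 = (-1) ^+ n.+2 * nu Q 2 (i + n.+1%:Z) by rewrite /x; congr (_ * nu Q 2 _); lia.
rewrite -(sgn_rec2 n) (sgn_rec1 n); ring.
Qed.
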